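(* Let $z_i=(x_i,y_i)$, $i=1,\dots,n$, be training data with $y_i\in\mathbb{R}$, and let $\ell(a,b)$ be a loss function that is continuous and differentiable almost everywhere, with $\ell'(a,b)=\partial\ell(a,b)/\partial b$. Index by $b$ the $B=n^n$ bootstrap samples (ordered $n$-tuples of indices in $\{1,\dots,n\}$), and for each $b$ let $\widehat{y_j}^{(b)}$ be the prediction for observation $j$ of the tree grown on sample $b$, assumed to be a deterministic function of $b$. Let $N_i^{(b)}$ be the number of times observation $i$ occurs in sample $b$ and $I_j^{(b)}=\mathbf{1}(N_j^{(b)}=0)$. For a weight vector $W=(w_1,\dots,w_n)$ with $\sum_i w_i=1$, let $g_W(b)$ be the probability of drawing bootstrap sample $b$ when each of the $n$ draws selects observation $k$ with probability $w_k$, and define $$S(\hat F_W)=\sum_{j=1}^n w_j\,\ell\!\left(y_j,\ \frac{\sum_b \widehat{y_j}^{(b)} I_j^{(b)} g_W(b)}{\sum_b I_j^{(b)} g_W(b)}\right).$$ Let $\hat F=\hat F_{W_0}$ with $W_0=(1/n,\dots,1/n)$, so $S(\hat F)=\frac1n\sum_j\ell(y_j,\widehat{y_j}^{\mathrm{OOB}})$ where $\widehat{y_j}^{\mathrm{OOB}}=\frac{\sum_b \widehat{y_j}^{(b)}I_j^{(b)}}{\sum_b I_j^{(b)}}$. For $\varepsilon$ near $0$ let $\hat F_{\varepsilon,i}$ put weight $\frac{1-\varepsilon}{n}+\varepsilon$ on $z_i$ and $\frac{1-\varepsilon}{n}$ on each $z_j$, $j\neq i$, and define $\hat D_i=\frac1n\frac{\partial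 S(\hat F_{\varepsilon,i})}{\partial\varepsilon}\big|_{\varepsilon=0}$. Then, with $e_n=(1-1/n)^{-n}$, $$\hat D_i=\frac1n\left\{\ell(y_i,\widehat{y_i}^{\mathrm{OOB}})-\frac1n\sum_j\ell(y_j,\widehat{y_j}^{\mathrm{OOB}})\right\}+\frac{e_n}{n}\sum_j \ell'(y_j,\widehat{y_j}^{\mathrm{OOB}})\left\{\frac1B\sum_b (N_i^{(b)}-1)I_j^{(b)}\big(\widehat{y_j}^{(b)}-\widehat{y_j}^{\mathrm{OOB}}\big)\right\}.$$
   Context: This is the out-of-bag (OOB) error of a bagged ensemble of trees under a general loss $\ell$, viewed as a functional $S$ of a weighted empirical distribution on the training data; $\hat D_i$ is $1/n$ times the empirical influence function of $S$. All sums over $b$ range over all $B=n^n$ bootstrap samples. *)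

(* Defs.v *)
From mathcomp Require Import all_boot all_order all_algebra.
From mathcomp Require Import all_classical all_reals all_analysis.
Set Implicit Arguments. Unset Strict Implicit. Unset Printing Implicit Defensive.
Import Order.TTheory GRing.Theory Num.Theory.
Local Open Scope ring_scope.

(* A bootstrap sample: an ordered n-tuple of indices in {0,...,n-1};
   there are exactly n^n of them. *)
Notation boot n := {ffun 'I_n -> 'I_n}.

Section Defs.
Variable R : realType.

Definition Ncount n (b : boot n) (i : 'I_n) : nat := #|[set k | b k == i]|.

Definition Iout n (b : boot n) (j : 'I_n) : R := (Ncount b j == 0%N)%:R.

Definition gW n (W : 'I_n -> R) (b : boot n) : R := \prod_(k < n) W (b k).

(* OOB-type weighted prediction for observation j under weights W;
   yhat j b is the prediction for j of the tree grown on sample b *)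
Definition oob_predW n (W : 'I_n -> R) (yhat : 'I_n -> boot n -> R) (j : 'I_n) : R :=
  (\sum_(b : boot n) yhat j b * Iout b j * gW W b) /
  (\sum_(b : boot n) Iout b j * gW W b).

Definition S_W n (ell : R -> R -> R) (y : 'I_n -> R) (yhat : 'I_n -> boot n -> R)
  (W : 'I_n -> R) : R :=
  \sum_(j < n) W j * ell (y j) (oob_predW W yhat j).

Definition W0 (n : nat) : 'I_n -> R := fun _ => n%:R^-1.
Arguments W0 : clear implicits.

Definition Weps n (i : 'I_n) (eps : R) : 'I_n -> R :=
  fun j => (1 - eps) / n%:R + (if j == i then eps else 0).

Definition yOOB n (yhat : 'I_n -> boot n -> R) (j : 'I_n) : R := oob_predW (W0 n) yhat j.

Definition ell' (ell : R -> R -> R) (a b : R) : R := derive1 (ell a) b.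

Definition Dhat n (ell : R -> R -> R) (y : 'I_n -> R) (yhat : 'I_n -> boot n -> R)
  (i : 'I_n) : R :=
  n%:R^-1 * derive1 (fun eps : R => S_W ell y yhat (Weps i eps)) 0.

Definition e_n (n : nat) : R := ((1 - n%:R^-1) ^+ n)^-1.

End Defs.

(* Main.v *)
Require Import Defs.
From mathcomp Require Import all_boot all_order all_algebra.
From mathcomp Require Import all_classical all_reals all_analysis.
From mathcomp Require Import ring.
Import Order.TTheory GRing.Theory Num.Theory.
Local Open Scope ring_scope.
Set Implicit Arguments. Unset Strict Implicit.

Section H.
Variable R : realType.

Lemma is_derive_sumS (T : Type) (s : seq T) (h : T -> R -> R) (dh : T -> R) (x : R) :
  (forall k, is_derive x 1 (h k) (dh k)) ->
  is_derive x 1 (fun e => \sum_(k <- s) h k e) (\sum_(k <- s) dh k).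
Proof.
move=> H; elim: s => [|a s IH].
  rewrite big_nil.
  have -> : (fun e : R => \sum_(k <- [::]) h k e) = cst 0.
    by apply/funext => e; rewrite big_nil.
  exact: is_derive_cst.
rewrite big_cons.
have -> : (fun e : R => \sum_(k <- a :: s) h k e) =
   (h a) + (fun e => \sum_(k <- s) h k e).
  by apply/funext => e; rewrite big_cons.
exact: is_deriveD.
Qed.

Lemma is_deriveM1 (f g : R -> R) (x df dg : R) :
  is_derive x 1 f df -> is_derive x 1 g dg ->
  is_derive x 1 (fun e => f e * g e) (f x * dg + g x * df).
Proof.
move=> Hf Hg.
have := is_deriveM Hf Hg.
done.
Qed.

Lemma is_derive_prodlin (T : Type) (s : seq T) (c : R) (d : T -> R) :
  is_derive (0:R) (1:R) (fun e : R => \prod_(k <- s) (c + e * d k))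
    (c ^+ (size s).-1 * \sum_(k <- s) d k).
Proof.
elim: s => [|a s IH].
  rewrite big_nil mulr0.
  have -> : (fun e : R => \prod_(k <- [::]) (c + e * d k)) = cst 1.
    by apply/funext => e; rewrite big_nil.
  exact: is_derive_cst.
have -> : (fun e : R => \prod_(k <- a :: s) (c + e * d k)) =
   (fun e => (c + e * d a) * \prod_(k <- s) (c + e * d k)).
  by apply/funext => e; rewrite big_cons.
have Ha : is_derive (0:R) 1 (fun e : R => c + e * d a) (d a).
  have H := is_deriveD (is_derive_cst c (0:R) (1:R))
     (is_deriveM1 (@is_derive_id _ _ (0:R) (1:R)) (is_derive_cst (d a) (0:R) (1:R))).
  apply: is_derive_eq H _.
  by rewrite !mul0r !add0r mulr1.
apply: is_derive_eq (is_deriveM1 Ha IH) _.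
rewrite /= mul0r addr0 big_cons.
have -> : \prod_(k <- s) (c + 0 * d k) = c ^+ size s.
  by rewrite (eq_bigr (fun _ => c)) ?big_const_seq ?count_predT ?iter_mulr_1 // => k _; rewrite mul0r addr0.
case: s {IH} => [|b s] /=; first by rewrite !big_nil expr0 !mul1r mulr0 add0r addr0.
by rewrite mulrA -exprS mulrDr addrC.
Qed.

Lemma is_deriveV1 (f : R -> R) (x df : R) : f x != 0 -> is_derive x 1 f df ->
  is_derive x 1 (fun e => (f e)^-1) (- (f x)^-2 * df).
Proof.
move=> fx0 [d1 d2]; apply: DeriveDef.
  exact: derivableV.
by rewrite deriveV // d2.
Qed.

Lemma is_derive1_comp (f g : R -> R) (x df dg : R) :
  is_derive x 1 f df -> is_derive (f x) 1 g dg ->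
  is_derive x 1 (fun e => g (f e)) (dg * df).
Proof.
move=> [d1 d2] [e1 e2]; apply: DeriveDef.
  apply/derivable1_diffP; apply: differentiable_comp; exact/derivable1_diffP.
have := derive1_comp d1 e1; rewrite !derive1E => ->.
by rewrite d2 e2.
Qed.
End H.

Theorem theorem2 (R : realType) (n : nat) (hn : (2 <= n)%N)
  (ell : R -> R -> R) (y : 'I_n -> R) (yhat : 'I_n -> boot n -> R) (i : 'I_n)
  (hell : forall j : 'I_n, derivable (ell (y j)) (yOOB yhat j) 1) :
  derivable (fun eps : R => S_W ell y yhat (Weps i eps)) 0 1 /\
  Dhat ell y yhat i =
    n%:R^-1 * (ell (y i) (yOOB yhat i)
               - n%:R^-1 * \sum_(j < n) ell (y j) (yOOB yhat j))
    + e_n R n / n%:R *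
      \sum_(j < n) ell' ell (y j) (yOOB yhat j) *
        ((n ^ n)%:R^-1 *
         \sum_(b : boot n) ((Ncount b i)%:R - 1) * Iout R b j *
                            (yhat j b - yOOB yhat j)).
Proof.
set c : R := n%:R^-1.
have n0 : (n%:R : R) != 0 by rewrite pnatr_eq0 -lt0n (leq_trans _ hn).
have c0 : c != 0 by rewrite invr_eq0.
pose d (k : 'I_n) : R := (k == i)%:R - c.
have WE : forall e, Weps i e = fun k => c + e * d k.
  move=> e; apply/funext => k; rewrite /Weps /d /c.
  case: (k == i) => /=; field => //.
have W00 : Weps i 0 = @W0 R n.
  by rewrite WE; apply/funext => k; rewrite mul0r addr0.
have g0 : forall b, gW (@W0 R n) b = c ^+ n.
  by move=> b; rewrite /gW /W0 prodr_const card_ord.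
pose gd (b : boot n) : R := c ^+ n.-1 * \sum_(k < n) d (b k).
have sz : size (index_enum 'I_n) = n.
  by rewrite /index_enum unlock -enumT -cardT card_ord.
have G : forall b, is_derive (0:R) (1:R) (fun e => gW (Weps i e) b) (gd b).
  move=> b; have := is_derive_prodlin (index_enum 'I_n) c (fun k => d (b k)).
  rewrite sz => H.
  have -> : (fun e => gW (Weps i e) b) = (fun e : R => \prod_(k <- index_enum 'I_n) (c + e * d (b k))).
    by apply/funext => e; rewrite /gW WE.
  exact: H.
have Kj : forall j : 'I_n, \sum_(b : boot n) Iout R b j = ((n.-1) ^ n)%:R.
  move=> j.
  have -> : \sum_(b : boot n) Iout R b j = (#|[set b : boot n | Ncount b j == 0%N]|)%:R.
    rewrite -sum1_card natr_sum [RHS]big_mkcond /=; apply: eq_bigr => b _.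
    by rewrite inE /Iout; case: (Ncount b j == 0%N).
  have -> : [set b : boot n | Ncount b j == 0%N] = [set b in ffun_on (predC1 j)].
    apply/setP => b; rewrite !inE /Ncount cards_eq0.
    apply/eqP/ffun_onP => [H k|H].
      apply/negP => /eqP bk.
      have : k \in [set k | b k == j] by rewrite inE bk.
      by rewrite H inE.
    apply/setP => k; rewrite !inE; apply/negP => /eqP bk.
    by have := H k; rewrite !inE bk eqxx.
  by rewrite cardsE card_ffun_on cardC1 !card_ord.
have gW0 : forall b, gW (Weps i 0) b = c ^+ n by move=> b; rewrite W00 g0.
set K : R := ((n.-1) ^ n)%:R.
have K0 : K != 0.
  rewrite /K pnatr_eq0 expn_eq0 negb_and; apply/orP; left.
  by rewrite -lt0n -ltnS prednK ?(leq_trans _ hn).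
have C0E : forall j, \sum_(b : boot n) Iout R b j * gW (Weps i 0) b = c ^+ n * K.
  move=> j; rewrite /K -(Kj j) mulr_sumr; apply: eq_bigr => b _.
  by rewrite gW0 mulrC.
have C0ne : forall j, \sum_(b : boot n) Iout R b j * gW (Weps i 0) b != 0.
  by move=> j; rewrite C0E mulf_neq0 // expf_neq0.
have HA : forall j, is_derive (0:R) (1:R)
   (fun e => \sum_(b : boot n) yhat j b * Iout R b j * gW (Weps i e) b)
   (\sum_(b : boot n) yhat j b * Iout R b j * gd b).
  move=> j.
  apply: (@is_derive_sumS _ _ _ (fun b e => yhat j b * Iout R b j * gW (Weps i e) b)) => b.
have HC : forall j, is_derive (0:R) (1:R)
   (fun e => \sum_(b : boot n) Iout R b j * gW (Weps i e) b)
   (\sum_(b : boot n) Iout R b j * gd b).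
  move=> j.
  apply: (@is_derive_sumS _ _ _ (fun b e => Iout R b j * gW (Weps i e) b)) => b.
pose A0 j := \sum_(b : boot n) yhat j b * Iout R b j * gW (Weps i 0) b.
pose C0 j := \sum_(b : boot n) Iout R b j * gW (Weps i 0) b.
pose A1 j := \sum_(b : boot n) yhat j b * Iout R b j * gd b.
pose C1 j := \sum_(b : boot n) Iout R b j * gd b.
pose PD j := A0 j * (- (C0 j)^-2 * C1 j) + (C0 j)^-1 * A1 j.
have HP : forall j, is_derive (0:R) (1:R) (fun e => oob_predW (Weps i e) yhat j) (PD j).
  move=> j; exact: is_deriveM1 (HA j) (is_deriveV1 (C0ne j) (HC j)).
have Hw : forall j, is_derive (0:R) (1:R) (fun e => Weps i e j) (d j).
  move=> j; have -> : (fun e => Weps i e j) = (fun e => c + e * d j) by apply/funext => e; rewrite WE.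
  have H := is_deriveD (is_derive_cst c (0:R) (1:R))
     (is_deriveM1 (@is_derive_id _ _ (0:R) (1:R)) (is_derive_cst (d j) (0:R) (1:R))).
  apply: is_derive_eq H _.
  by rewrite !mul0r !add0r mulr1.
have P0 : forall j, oob_predW (Weps i 0) yhat j = yOOB yhat j.
  by move=> j; rewrite W00.
pose L1 j := 'D_1 (ell (y j)) (yOOB yhat j).
have Hl : forall j, is_derive (0:R) (1:R)
   (fun e => ell (y j) (oob_predW (Weps i e) yhat j)) (L1 j * PD j).
  move=> j; apply: is_derive1_comp (HP j) _.
  rewrite P0; exact: derivableP (hell j).
pose SD := \sum_(j < n) (Weps i 0 j * (L1 j * PD j) + ell (y j) (oob_predW (Weps i 0) yhat j) * d j).
have HS : is_derive (0:R) (1:R) (fun e => S_W ell y yhat (Weps i e)) SD.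
  apply: (@is_derive_sumS _ _ _ (fun j e => Weps i e j * ell (y j) (oob_predW (Weps i e) yhat j))) => j.
  exact: is_deriveM1 (Hw j) (Hl j).
split; first by case: HS.
rewrite /Dhat derive1E (@derive_val _ _ _ _ _ _ _ HS).
pose T j := \sum_(b : boot n) ((Ncount b i)%:R - 1) * Iout R b j * (yhat j b - yOOB yhat j).
have Nd : forall b : boot n, \sum_(k < n) d (b k) = (Ncount b i)%:R - 1.
  move=> b; rewrite /d sumrB sumr_const card_ord /c -[n%:R^-1 *+ n]mulr_natr mulVf //.
  congr (_ - _); rewrite /Ncount -sum1_card natr_sum [RHS]big_mkcond /=.
  by apply: eq_bigr => k _; rewrite inE; case: (b k == i).
have PDE : forall j, PD j = n%:R / K * T j.
  move=> j.
  have A0E : A0 j = yOOB yhat j * C0 j.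
    by rewrite -P0 /oob_predW /A0 /C0 divfK // C0ne.
  have H1 : A1 j - yOOB yhat j * C1 j = c ^+ n.-1 * T j.
    rewrite /A1 /C1 /T mulr_sumr mulr_sumr -sumrB; apply: eq_bigr => b _.
    rewrite /gd Nd; ring.
  have -> : PD j = (C0 j)^-1 * (A1 j - yOOB yhat j * C1 j).
    rewrite /PD A0E; field; exact: C0ne.
  rewrite H1 /C0 C0E.
  have cn : c ^+ n = c * c ^+ n.-1 by rewrite -exprS prednK // (leq_trans _ hn).
  rewrite cn /c; field.
  by rewrite K0 n0 expf_neq0 ?invr_eq0.
have -> : SD = \sum_(j < n) (c * (L1 j * (n%:R / K * T j)) + ell (y j) (yOOB yhat j) * d j).
  by apply: eq_bigr => j _; rewrite PDE W00.
have Ld : \sum_(j < n) ell (y j) (yOOB yhat j) * d j =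
    ell (y i) (yOOB yhat i) - c * \sum_(j < n) ell (y j) (yOOB yhat j).
  rewrite /d; under eq_bigr => j _ do rewrite mulrBr.
  rewrite sumrB mulr_sumr; congr (_ - _); last by apply: eq_bigr => j _; rewrite mulrC.
  rewrite (bigD1 i) //= eqxx mulr1 big1 ?addr0 // => j ji.
  by rewrite (negbTE ji) mulr0.
have EK : e_n R n / (n ^ n)%:R = K^-1.
  rewrite /e_n /K natrX -invfM -exprMn natrX; congr ((_ ^+ _)^-1).
  by rewrite mulrBl mul1r /c mulVf // -subn1 natrB // (leq_trans _ hn).
rewrite big_split /= Ld.
have -> : \sum_(j < n) c * (L1 j * (n%:R / K * T j)) = c * n%:R / K * \sum_(j < n) L1 j * T j.
  rewrite mulr_sumr; apply: eq_bigr => j _; ring.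
have -> : \sum_(j < n) ell' ell (y j) (yOOB yhat j) * ((n ^ n)%:R^-1 * T j) =
    (n ^ n)%:R^-1 * \sum_(j < n) L1 j * T j.
  rewrite mulr_sumr; apply: eq_bigr => j _; rewrite /ell' derive1E /L1; ring.
set X := \sum_(j < n) L1 j * T j.
set Y := ell (y i) (yOOB yhat i) - c * \sum_(j < n) ell (y j) (yOOB yhat j).
have -> : e_n R n * c * ((n ^ n)%:R^-1 * X) = c * (e_n R n / (n ^ n)%:R) * X by ring.
rewrite EK /c; field.
by rewrite K0 n0.
Qed.
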